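(* Let $T\ge1$ and $\varepsilon>0$, and consider the MDP with states $\{1,2,3,4\}$ defined as follows. State 1 has two actions: one gives reward $\frac12$ and moves deterministically to state 2; the other gives reward $0$ and moves deterministically to state 3. State 2 has a single action giving reward $\frac12$ and moving deterministically to state 1. State 3 has a single action giving reward $\frac12$ and moving to state 3 with probability $1-\frac1T$ and to state 4 with probability $\frac1T$. State 4 has two actions: one gives reward $\frac12+\varepsilon$ and moves to state 4 with probability $1-\frac1T$ and to state 3 with probability $\frac1T$; the other gives reward $0$ and moves deterministically to state 2. Then $\|h^\star\|_{\mathrm{sp}}=\frac{\varepsilon T}2+\varepsilon+\frac12$, but there exists a policy $\pi$ with constant gain such that $\rho^\pi=\rho^\star-\frac\varepsilon2\mathbf 1$ and $\|h^\pi\|_{\mathrm{sp}}=\frac12$.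
   Context: Policies are stationary Markovian. Gain $\rho^\pi(s)=\lim_T\frac1T\mathbb{E}^\pi_s[\sum_{t<T}r(S_t,A_t)]$, $\rho^\star=\sup_\pi\rho^\pi$; bias $h^\pi(s)=\mathrm{C}\text{-}\lim_T\mathbb{E}^\pi_s[\sum_{t<T}(r(S_t,A_t)-\rho^\pi(S_t))]$; $h^\star$ is the bias of a Blackwell-optimal policy. $\|x\|_{\mathrm{sp}}=\max x-\min x$; $\mathbf 1$ is the all-ones vector. *)

(* Defs.v *)
From mathcomp Require Import all_boot all_order all_algebra.
From mathcomp Require Import all_classical all_reals all_analysis.
Set Implicit Arguments. Unset Strict Implicit. Unset Printing Implicit Defensive.
Import Order.TTheory GRing.Theory Num.Theory numFieldNormedType.Exports.
Local Open Scope ring_scope.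
Local Open Scope classical_set_scope.

Record mdp (R : realType) (n : nat) := MDP {
  nact : 'I_n -> nat;
  rew : forall s : 'I_n, 'I_(nact s) -> R;
  trans : forall s : 'I_n, 'I_(nact s) -> 'I_n -> R }.

Section MDPDefs.
Context {R : realType} {n : nat} (M : mdp R n).

Definition policy := forall s : 'I_n, 'I_(nact M s) -> R.
Definition is_policy (pi : policy) : Prop :=
  forall s, (forall a, 0 <= pi s a) /\ \sum_a pi s a = 1.

Definition Ppi (pi : policy) : 'M[R]_n :=
  \matrix_(s, s') \sum_a pi s a * @trans R n M s a s'.
Definition rpi (pi : policy) : 'cV[R]_n :=
  \col_s \sum_a pi s a * @rew R n M s a.

(* E^pi_s[ v(S_t) ] = (P_pi^t v)(s) *)
Definition expect_t (pi : policy) (t : nat) (v : 'cV[R]_n) (s : 'I_n) : R :=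
  (iter t (mulmx (Ppi pi)) v) s ord0.

Definition gain (pi : policy) (s : 'I_n) : R :=
  limn (fun T : nat => T%:R^-1 * \sum_(t < T) expect_t pi t (rpi pi) s).

(* bias h^pi(s) = C-lim_T E^pi_s[sum_{t<T} (r(S_t,A_t) - rho^pi(S_t))] *)
Definition bias_partial (pi : policy) (s : 'I_n) (T : nat) : R :=
  \sum_(t < T) (expect_t pi t (rpi pi) s - expect_t pi t (\col_i gain pi i) s).
Definition bias (pi : policy) (s : 'I_n) : R :=
  limn (fun N : nat => N%:R^-1 * \sum_(T < N) bias_partial pi s T.+1).

Definition opt_gain (s : 'I_n) : R :=
  sup [set x | exists pi, is_policy pi /\ x = gain pi s].

Definition disc_value (g : R) (pi : policy) (s : 'I_n) : R :=
  limn (fun N : nat => \sum_(t < N) g ^+ t * expect_t pi t (rpi pi) s).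
Definition blackwell_optimal (pi : policy) : Prop :=
  is_policy pi /\
  exists g0 : R, 0 <= g0 < 1 /\
    forall g : R, g0 < g < 1 ->
      forall pi', is_policy pi' -> forall s, disc_value g pi' s <= disc_value g pi s.
End MDPDefs.
Arguments policy {R n} M.
Arguments is_policy {R n} M pi.
Arguments Ppi {R n} M pi.
Arguments rpi {R n} M pi.
Arguments expect_t {R n} M pi t v s.
Arguments gain {R n} M pi s.
Arguments bias_partial {R n} M pi s T.
Arguments bias {R n} M pi s.
Arguments opt_gain {R n} M s.
Arguments disc_value {R n} M g pi s.
Arguments blackwell_optimal {R n} M pi.

Definition sp_norm {R : realType} {n : nat} (x : 'I_n.+1 -> R) : R :=
  \big[Num.max/x ord0]_i x i - \big[Num.min/x ord0]_i x i.

(* The example MDP.  State k (1..4) of the paper is the ordinal k-1. *)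
Definition ex_nact (s : 'I_4) : nat := if (val s == 0)%N || (val s == 3)%N then 2 else 1.

Definition ex_rew_nat {R : realType} (eps : R) (s a : nat) : R :=
  match s, a with
  | 0, 0 => 1/2          (* state 1, action "to 2" *)
  | 0, _ => 0            (* state 1, action "to 3" *)
  | 1, _ => 1/2
  | 2, _ => 1/2
  | 3, 0 => 1/2 + eps    (* state 4, action "stay" *)
  | _, _ => 0            (* state 4, action "to 2" *)
  end.

Definition ex_trans_nat {R : realType} (T : R) (s a s' : nat) : R :=
  match s, a, s' with
  | 0, 0, 1 => 1
  | 0, 1, 2 => 1
  | 1, _, 0 => 1
  | 2, _, 2 => 1 - 1/T
  | 2, _, 3 => 1/T
  | 3, 0, 3 => 1 - 1/T
  | 3, 0, 2 => 1/T
  | 3, 1, 1 => 1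
  | _, _, _ => 0
  end.

Definition ex_mdp {R : realType} (T eps : R) : mdp R 4 :=
  @MDP R 4 ex_nact
    (fun s a => ex_rew_nat eps (val s) (val a))
    (fun s a s' => ex_trans_nat T (val s) (val a) (val s')).

(* Main.v *)
Require Import Defs.
From mathcomp Require Import all_boot all_order all_algebra.
From mathcomp Require Import all_classical all_reals all_analysis.
Import Order.TTheory GRing.Theory Num.Theory.
Local Open Scope ring_scope.
From mathcomp Require Import ring lra.
Import numFieldNormedType.Exports.
Set Implicit Arguments. Unset Strict Implicit. Unset Printing Implicit Defensive.
Local Open Scope classical_set_scope.

Section Gen.
Variable R : realType.
Variable n : nat.
Implicit Types (P A : 'M[R]_n) (v w : 'cV[R]_n).

Lemma iterE P t v : iter t (mulmx P) v = P ^+ t *m v.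
Proof.
elim: t => [|t IH]; first by rewrite expr0 mul1mx.
by rewrite iterS IH exprS mulmxA.
Qed.

Lemma telesc A v N : \sum_(t < N) A ^+ t *m (v - A *m v) = v - A ^+ N *m v.
Proof.
elim: N => [|N IH]; first by rewrite big_ord0 expr0 mul1mx subrr.
rewrite big_ord_recr /= IH mulmxBr mulmxA exprSr -mulmxE.
by rewrite addrA subrK.
Qed.

Definition stoch P := (forall i j, 0 <= P i j) /\ (forall i, \sum_j P i j = 1).
Definition nonneg v := forall i, 0 <= v i ord0.
Definition bnd v B := forall i, `|v i ord0| <= B.

Lemma stoch_nonneg P v : stoch P -> nonneg v -> nonneg (P *m v).
Proof.
move=> [P0 P1] v0 i; rewrite mxE; apply: sumr_ge0 => j _; exact: mulr_ge0.
Qed.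

Lemma stoch_bnd P v B : stoch P -> bnd v B -> bnd (P *m v) B.
Proof.
move=> [P0 P1] vB i; rewrite mxE.
apply: le_trans (ler_norm_sum _ _ _) _.
rewrite -[B]mul1r -(P1 i) mulr_suml; apply: ler_sum => j _.
by rewrite normrM ger0_norm // ler_wpM2l.
Qed.

Lemma stoch_pow_nonneg P t v : stoch P -> nonneg v -> nonneg (P ^+ t *m v).
Proof.
move=> sP v0; elim: t => [|t IH]; first by rewrite expr0 mul1mx.
by rewrite exprS -mulmxE -mulmxA; apply: stoch_nonneg.
Qed.

Lemma stoch_pow_bnd P t v B : stoch P -> bnd v B -> bnd (P ^+ t *m v) B.
Proof.
move=> sP v0; elim: t => [|t IH]; first by rewrite expr0 mul1mx.
by rewrite exprS -mulmxE -mulmxA; apply: stoch_bnd.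
Qed.

Lemma bnd_ex v : bnd v (\sum_i `|v i ord0|).
Proof.
move=> i; rewrite (bigD1 i) //= lerDl; apply: sumr_ge0 => j _; exact: normr_ge0.
Qed.

Lemma stoch_const P c : stoch P -> P *m (const_mx c : 'cV[R]_n) = const_mx c.
Proof.
move=> [P0 P1]; apply/matrixP => i j; rewrite !mxE.
under eq_bigr do rewrite mxE.
by rewrite -mulr_suml P1 mul1r.
Qed.

Lemma stoch_pow_const P t c : stoch P -> P ^+ t *m (const_mx c : 'cV[R]_n) = const_mx c.
Proof.
move=> sP; elim: t => [|t IH]; first by rewrite expr0 mul1mx.
by rewrite exprS -mulmxE -mulmxA IH stoch_const.
Qed.

End Gen.


Section Lim.
Variable R : realType.

Lemma invn_cvg0 : (fun N : nat => (N%:R : R)^-1) @ \oo --> 0.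
Proof.
apply/cvgrPdist_le => e e0.
have ei0 : 0 <= e^-1 by rewrite invr_ge0 ltW.
have hk := archi_boundP ei0.
set k := Num.Def.archi_bound _ in hk.
near=> N.
have hN : (k <= N)%N by near: N; exact: nbhs_infty_ge.
have hkN : (k%:R : R) <= N%:R by rewrite ler_nat.
have Npos : (0 : R) < N%:R by apply: lt_le_trans hkN; apply: le_lt_trans hk.
rewrite sub0r normrN ger0_norm ?invr_ge0 ?ltW //.
have h1 : e * e^-1 = 1 by rewrite mulfV // gt_eqF.
have h2 : N%:R * (N%:R : R)^-1 = 1 by rewrite mulfV // gt_eqF.
have h3 : 0 < (N%:R : R)^-1 by rewrite invr_gt0.
nra.
Unshelve. all: end_near.
Qed.

Lemma harm_cvg0 (C : R) : (fun N : nat => C * (N%:R : R)^-1) @ \oo --> 0.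
Proof. rewrite -(mulr0 C); apply: cvgMl_tmp; exact: invn_cvg0. Qed.

Lemma geo_cvg0 (g C : R) : 0 <= g < 1 -> (fun N : nat => C * g ^+ N) @ \oo --> 0.
Proof.
move=> /andP[g0 g1]; rewrite -(mulr0 C); apply: cvgMl_tmp; apply: cvg_expr.
by rewrite ger0_norm.
Qed.

Lemma cvg_of_bound (u e : nat -> R) l : e @ \oo --> 0 ->
  (forall N, (0 < N)%N -> `|u N - l| <= e N) -> u @ \oo --> l.
Proof.
move=> e0 H; apply/cvgrPdist_le => x x0.
move/cvgrPdist_le: e0 => /(_ x x0) e0.
near=> N.
have hN : (0 < N)%N by near: N; exact: nbhs_infty_gt.
have he : `|0 - e N| <= x by near: N; exact: e0.
rewrite distrC; apply: le_trans (H N hN) _.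
by move: he; rewrite sub0r normrN; apply: le_trans; exact: ler_norm.
Unshelve. all: end_near.
Qed.

Lemma lim_le_of (u e : nat -> R) l : cvgn u -> e @ \oo --> 0 ->
  (forall N, (0 < N)%N -> u N <= l + e N) -> limn u <= l.
Proof.
move=> cu e0 H.
have cle : (fun N => l + e N) @ \oo --> l.
  rewrite -[X in _ --> X]addr0; apply: cvgD => //; exact: cvg_cst.
have -> : l = limn (fun N => l + e N) by rewrite (cvg_lim _ cle).
apply: ler_lim => //; first by apply/cvg_ex; exists l.
near=> N; apply: H; near: N; exact: nbhs_infty_gt.
Unshelve. all: end_near.
Qed.

End Lim.


Lemma zmod_aux (Z : zmodType) (V a b S e : Z) : V - a - S + (a - b - e) = V - b - (S + e).
Proof. by rewrite !addrA [V - a - S + a]addrAC subrK opprD !addrA [V - S - b]addrAC. Qed.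

Section Sums.
Variable R : realType.
Variable n : nat.
Implicit Types (P A : 'M[R]_n) (v w r h V d : 'cV[R]_n).

Lemma sum_gain P r c h d N : stoch P ->
  r = const_mx c + (h - P *m h) - d ->
  \sum_(t < N) P ^+ t *m r =
    (const_mx c) *+ N + (h - P ^+ N *m h) - \sum_(t < N) P ^+ t *m d.
Proof.
move=> sP ->.
under eq_bigr do rewrite mulmxBr mulmxDr stoch_pow_const //.
rewrite sumrB big_split /= sumr_const card_ord telesc //.
Qed.

Lemma sum_disc P V d (g : R) N :
  \sum_(t < N) g ^+ t *: (P ^+ t *m (V - g *: (P *m V) - d)) =
    V - g ^+ N *: (P ^+ N *m V) - \sum_(t < N) g ^+ t *: (P ^+ t *m d).
Proof.
elim: N => [|N IH]; first by rewrite !big_ord0 expr0 mul1mx scale1r subrr subr0.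
rewrite !big_ord_recr /= IH !mulmxBr !scalerBr.
rewrite -scalemxAr scalerA mulmxA -!exprSr.
have -> : P ^+ N *m P = P ^+ N.+1 by rewrite exprSr.
exact: zmod_aux.
Qed.

End Sums.


Lemma avg_aux (R : realType) (c x B : R) (N : nat) : (0 < N)%N -> `|x| <= B ->
  `|N%:R^-1 * (c *+ N + x) - c| <= B * N%:R^-1.
Proof.
move=> hN xB; rewrite -[c *+ N]mulr_natr; set Nr := (N%:R : R).
have N0 : 0 < Nr by rewrite ltr0n.
rewrite mulrDr [Nr^-1 * _]mulrC mulfK ?gt_eqF //.
have Ni : 0 <= Nr^-1 by rewrite invr_ge0 ltW.
rewrite addrAC subrr add0r normrM (ger0_norm Ni) [B * _]mulrC.
by rewrite ler_wpM2l.
Qed.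

Lemma bnd_sub (R : realType) n (u v : 'cV[R]_n) B1 B2 :
  bnd u B1 -> bnd v B2 -> bnd (u - v) (B1 + B2).
Proof.
move=> h1 h2 i; rewrite !mxE; apply: le_trans (ler_normB _ _) _; exact: lerD.
Qed.

Lemma bnd_ge0 (R : realType) n (u : 'cV[R]_n.+1) B : bnd u B -> 0 <= B.
Proof. by move=> /(_ ord0); apply: le_trans. Qed.

Lemma ent2 (R : realType) m k (A X : 'M[R]_(m,k)) N i j :
  (A *+ N + X) i j = A i j *+ N + X i j.
Proof. by rewrite !mxE mulmxnE. Qed.
Lemma entB (R : realType) m k (A X : 'M[R]_(m,k)) i j : (A - X) i j = A i j - X i j.
Proof. by rewrite !mxE. Qed.
Lemma entZ (R : realType) m k (a : R) (A : 'M[R]_(m,k)) i j : (a *: A) i j = a * A i j.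
Proof. by rewrite !mxE. Qed.

Lemma avg_le (R : realType) (c x y B : R) (N : nat) : (0 < N)%N -> x <= B -> 0 <= y ->
  N%:R^-1 * (c *+ N + x - y) <= c + B * N%:R^-1.
Proof.
move=> hN xB y0; rewrite -[c *+ N]mulr_natr; set Nr := (N%:R : R).
have N0 : 0 < Nr by rewrite ltr0n.
have Ni : 0 < Nr^-1 by rewrite invr_gt0.
rewrite mulrBr mulrDr [Nr^-1 * (c * Nr)]mulrC mulfK ?gt_eqF //.
have h1 : 0 <= Nr^-1 * (B - x) by apply: mulr_ge0; [exact: ltW | rewrite subr_ge0].
have h2 : 0 <= Nr^-1 * y by apply: mulr_ge0; [exact: ltW | done].
rewrite mulrBr in h1; rewrite [B * _]mulrC; lra.
Qed.

Section MDPGen.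
Variables (R : realType) (n : nat) (M : mdp R n.+1).
Implicit Types (pi : policy M) (v w h V d : 'cV[R]_n.+1).

Lemma expectE pi t v s : expect_t M pi t v s = (Ppi M pi ^+ t *m v) s ord0.
Proof. by rewrite /expect_t iterE. Qed.

Lemma gain_exact pi c h : stoch (Ppi M pi) ->
  rpi M pi = const_mx c + (h - Ppi M pi *m h) -> forall s, gain M pi s = c.
Proof.
move=> sP Er s; rewrite /gain; apply: cvg_lim => //.
have hB := bnd_ex h; set B := \sum_i _ in hB.
apply: (cvg_of_bound (harm_cvg0 (B + B))) => N hN.
under eq_bigr do rewrite expectE.
rewrite -summxE (@sum_gain _ _ _ _ c h 0 N sP); last by rewrite subr0.
rewrite big1 ?subr0; last by move=> t _; rewrite mulmx0.
rewrite mxE mulmxnE mxE.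
apply: avg_aux => //.
have := bnd_sub hB (stoch_pow_bnd N sP hB) s; by rewrite mxE.
Qed.

Lemma gain_le pi c h d : stoch (Ppi M pi) ->
  rpi M pi = const_mx c + (h - Ppi M pi *m h) - d -> nonneg d -> 0 <= c ->
  forall s, gain M pi s <= c.
Proof.
move=> sP Er d0 c0 s; rewrite /gain.
set u := fun T : nat => _.
have [cu|ncu] := pselect (cvgn u); last by rewrite dvgP.
have hB := bnd_ex h; set B := \sum_i _ in hB.
apply: (lim_le_of cu (harm_cvg0 (B + B))) => N hN.
rewrite /u; under eq_bigr do rewrite expectE.
rewrite -summxE (sum_gain N sP Er) entB ent2 mxE.
apply: avg_le => //.
  have := bnd_sub hB (stoch_pow_bnd N sP hB) s; rewrite mxE.
  by apply: le_trans; apply: ler_norm.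
rewrite summxE; apply: sumr_ge0 => t _; exact: stoch_pow_nonneg.
Qed.

Lemma bias_exact pi c h w : stoch (Ppi M pi) ->
  rpi M pi = const_mx c + (h - Ppi M pi *m h) -> h = w - Ppi M pi *m w ->
  forall s, bias M pi s = h s ord0.
Proof.
move=> sP Er Eh s.
have gE := gain_exact sP Er.
have colE : (\col_i gain M pi i) = const_mx c.
  by apply/matrixP => i j; rewrite !mxE gE.
have bpE : forall T, bias_partial M pi s T = (h - Ppi M pi ^+ T *m h) s ord0.
  move=> T; rewrite /bias_partial colE.
  under eq_bigr do rewrite !expectE -entB -mulmxBr.
  rewrite -summxE.
  have -> : rpi M pi - const_mx c = h - Ppi M pi *m h.
    by rewrite Er addrAC subrr add0r.
  by rewrite telesc.
rewrite /bias; apply: cvg_lim => //.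
have hB := bnd_ex w; set B := \sum_i _ in hB.
apply: (cvg_of_bound (harm_cvg0 (B + B))) => N hN.
under eq_bigr do rewrite bpE.
rewrite -summxE sumrB sumr_const card_ord.
have -> : \sum_(T < N) Ppi M pi ^+ T.+1 *m h = Ppi M pi *m (w - Ppi M pi ^+ N *m w).
  rewrite -telesc mulmx_sumr; apply: eq_bigr => T _.
  by rewrite exprS -mulmxA -Eh.
rewrite entB mulmxnE.
apply: avg_aux => //; rewrite normrN.
exact: (stoch_bnd sP (bnd_sub hB (stoch_pow_bnd N sP hB))).
Qed.

Lemma disc_exact pi V g : stoch (Ppi M pi) -> 0 <= g < 1 ->
  rpi M pi = V - g *: (Ppi M pi *m V) -> forall s, disc_value M g pi s = V s ord0.
Proof.
move=> sP g01 Er s; rewrite /disc_value; apply: cvg_lim => //.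
have hB := bnd_ex V; set B := \sum_i _ in hB.
apply: (cvg_of_bound (geo_cvg0 B g01)) => N _.
under eq_bigr do rewrite expectE -entZ.
rewrite -summxE.
have -> : rpi M pi = V - g *: (Ppi M pi *m V) - 0 by rewrite subr0.
rewrite sum_disc big1 ?subr0; last by move=> t _; rewrite mulmx0 scaler0.
rewrite entB entZ addrAC subrr add0r normrN normrM.
case/andP: g01 => g0 _.
rewrite (ger0_norm (exprn_ge0 N g0)) mulrC ler_wpM2r //.
  exact: exprn_ge0.
exact: stoch_pow_bnd.
Qed.

Lemma disc_le pi V d g : stoch (Ppi M pi) -> 0 <= g < 1 ->
  rpi M pi = V - g *: (Ppi M pi *m V) - d -> nonneg d -> nonneg (rpi M pi) ->
  forall s, disc_value M g pi s <= V s ord0 - d s ord0.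
Proof.
move=> sP g01 Er d0 r0 s; rewrite /disc_value.
have /andP[g0 g1] := g01.
set u := fun N : nat => _.
have uE : forall N, u N = (V - g ^+ N *: (Ppi M pi ^+ N *m V)
    - \sum_(t < N) g ^+ t *: (Ppi M pi ^+ t *m d)) s ord0.
  move=> N; rewrite /u; under eq_bigr do rewrite expectE -entZ.
  by rewrite -summxE Er sum_disc.
have Sge : forall N, 0 <= (\sum_(t < N) g ^+ t *: (Ppi M pi ^+ t *m d)) s ord0.
  move=> N; rewrite summxE; apply: sumr_ge0 => t _; rewrite entZ.
  apply: mulr_ge0; [exact: exprn_ge0 | exact: stoch_pow_nonneg].
have Sge1 : forall N, (0 < N)%N ->
    d s ord0 <= (\sum_(t < N) g ^+ t *: (Ppi M pi ^+ t *m d)) s ord0.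
  case=> // N _; rewrite summxE big_ord_recl /= expr0 mul1mx scale1r lerDl.
  apply: sumr_ge0 => t _; rewrite entZ.
  apply: mulr_ge0; [exact: exprn_ge0 | exact: stoch_pow_nonneg].
have hB := bnd_ex V; set B := \sum_i _ in hB.
have B0 : 0 <= B by apply: bnd_ge0 hB.
have key : forall N, - (g ^+ N * (Ppi M pi ^+ N *m V) s ord0) <= g ^+ N * B.
  move=> N; have := stoch_pow_bnd N sP hB s; rewrite ler_norml => /andP[h1 h2].
  have a0 : 0 <= g ^+ N by exact: exprn_ge0.
  nra.
have cu : cvgn u.
  apply: nondecreasing_is_cvgn.
    apply/nondecreasing_seqP => N; rewrite /u big_ord_recr /= lerDl expectE.
    apply: mulr_ge0; [exact: exprn_ge0 | exact: stoch_pow_nonneg].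
  exists (V s ord0 + B) => _ [N _ <-]; rewrite uE !entB entZ.
  have := key N; have := Sge N; have : g ^+ N <= 1 by apply: exprn_ile1 => //; apply: ltW.
  have a0 : 0 <= g ^+ N by exact: exprn_ge0.
  nra.
apply: (lim_le_of cu (geo_cvg0 B g01)) => N hN.
rewrite uE !entB entZ.
have := key N; have := Sge1 N hN.
lra.
Qed.

End MDPGen.

Section Pol.
Variables (R : realType) (n : nat) (M : mdp R n).
Implicit Types (pi : policy M).

Lemma PpiE pi s j : Ppi M pi s j = \sum_a pi s a * @trans R n M s a j.
Proof. by rewrite /Ppi mxE. Qed.
Lemma rpiE pi s : rpi M pi s ord0 = \sum_a pi s a * @rew R n M s a.
Proof. by rewrite /rpi mxE. Qed.

Lemma Q_id pi (v : 'cV[R]_n) g s :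
  rpi M pi s ord0 + g * (Ppi M pi *m v) s ord0 =
  \sum_a pi s a * (@rew R n M s a + g * \sum_j @trans R n M s a j * v j ord0).
Proof.
rewrite rpiE mxE.
under [in RHS]eq_bigr do rewrite mulrDr.
rewrite big_split /=; congr (_ + _).
rewrite [LHS]mulr_sumr. under [in LHS]eq_bigr do rewrite PpiE mulr_suml mulr_sumr.
under [in RHS]eq_bigr do rewrite mulr_sumr mulr_sumr.
rewrite exchange_big /=; apply: eq_bigr => a _; apply: eq_bigr => j _.
ring.
Qed.

Lemma Ppi_stoch pi : is_policy M pi ->
  (forall s a, (forall j, 0 <= @trans R n M s a j) /\ \sum_j @trans R n M s a j = 1) ->
  stoch (Ppi M pi).
Proof.
move=> hp ht; split.
  move=> i j; rewrite PpiE; apply: sumr_ge0 => a _.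
  apply: mulr_ge0; [exact: (proj1 (hp i)) | exact: (proj1 (ht i a))].
move=> i; under eq_bigr do rewrite PpiE.
rewrite exchange_big /=.
under eq_bigr do rewrite -mulr_sumr (proj2 (ht i _)) mulr1.
exact: (proj2 (hp i)).
Qed.

Lemma rpi_nonneg pi : is_policy M pi -> (forall s a, 0 <= @rew R n M s a) ->
  nonneg (rpi M pi).
Proof.
move=> hp hr i; rewrite rpiE; apply: sumr_ge0 => a _.
apply: mulr_ge0; [exact: (proj1 (hp i)) | exact: hr].
Qed.

Lemma pol_avg pi s (f : 'I_(nact M s) -> R) K : is_policy M pi ->
  (forall a, f a <= K) -> \sum_a pi s a * f a <= K.
Proof.
move=> hp hf; apply: le_trans (_ : \sum_a pi s a * K <= K).
  apply: ler_sum => a _; apply: ler_wpM2l; [exact: (proj1 (hp s)) | exact: hf].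
by rewrite -mulr_suml (proj2 (hp s)) mul1r.
Qed.

Lemma pol_gap pi s (f : 'I_(nact M s) -> R) K a0 : is_policy M pi ->
  (forall a, f a <= K) -> pi s a0 * (K - f a0) <= K - \sum_a pi s a * f a.
Proof.
move=> hp hf.
have -> : K - \sum_a pi s a * f a = \sum_a pi s a * (K - f a).
  under [in RHS]eq_bigr do rewrite mulrBr.
  by rewrite sumrB -mulr_suml (proj2 (hp s)) mul1r.
rewrite (bigD1 a0) //= lerDl; apply: sumr_ge0 => a _.
apply: mulr_ge0; [exact: (proj1 (hp s)) | by rewrite subr_ge0].
Qed.

End Pol.


Lemma ineq_main (R : realType) (T eps g S D : R) : 1 <= T -> 0 < eps -> 1/2 < g -> g < 1 ->
  (1 - g) * (2 + eps * T) < eps / 2 -> (1 - g) * S = 1 + eps ->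
  (1 - g * (1 - 2 * (1 / T))) * D = eps ->
  1/2 + g * (1/2 + g * (g * ((S - D) / 2))) < g * ((S - D) / 2) /\
  g * (1/2 + g * (g * ((S - D) / 2))) < (S + D) / 2.
Proof.
move=> hT he hg1 hg2 hc hS hD.
have T0 : 0 < T by apply: lt_le_trans hT.
set q := 1 / T in hD.
have qT : q * T = 1 by rewrite /q mul1r mulVf // gt_eqF.
have q0 : 0 < q by rewrite /q divr_gt0.
have Den0 : 0 < 1 - g * (1 - 2 * q) by nra.
have D0 : 0 < D.
  have : 0 < (1 - g * (1 - 2 * q)) * D by rewrite hD.
  by rewrite pmulr_rgt0.
have h1 : 2 * g * q * D <= eps by nra.
have h2 : 2 * g * q * D * T <= eps * T by rewrite ler_wpM2r // ltW.
have gD : 2 * g * D <= eps * T.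
  have -> : 2 * g * D = 2 * g * q * D * T by rewrite -[LHS]mulr1 -qT; ring.
  exact: h2.
set X := (1 - g) * (S - D).
have gX1 : 1 < g * X.
  have e1 : g * X = g * (1 + eps) - (1 - g) * (g * D) by rewrite /X -hS; ring.
  have e2 : (1 - g) * (2 * g * D) <= (1 - g) * (eps * T).
    by rewrite ler_wpM2l // subr_ge0 ltW.
  nra.
have X1 : 1 < X by nra.
have k1 : 0 < (1 + g) * (g * X - 1) by apply: mulr_gt0; lra.
have k2 : 0 <= (g + g * g) * X by apply: mulr_ge0; nra.
have e3 : (1 + g) * (g * X) = g * (S - D) - g * (g * (g * (S - D))) by rewrite /X; ring.
have e4 : (1 - g * (g * g)) * (S - D) = X + (g + g * g) * X by rewrite /X; ring.
split; nra.
Qed.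


Lemma bigmax_at (R : realType) n (x : 'I_n.+1 -> R) k :
  (forall i, x i <= x k) -> \big[Num.max/x ord0]_i x i = x k.
Proof.
move=> H; apply/le_anti/andP; split; last exact: le_bigmax.
by apply: bigmax_le => // i _; exact: H.
Qed.

Lemma bigmin_at (R : realType) n (x : 'I_n.+1 -> R) k :
  (forall i, x k <= x i) -> \big[Num.min/x ord0]_i x i = x k.
Proof.
move=> H; apply/le_anti/andP; split; first exact: bigmin_le.
by apply: le_bigmin => // i _; exact: H.
Qed.

Lemma bias_ext (R : realType) n (M : mdp R n) (p1 p2 : policy M) :
  Ppi M p1 = Ppi M p2 -> rpi M p1 = rpi M p2 -> bias M p1 = bias M p2.
Proof. by move=> e1 e2; rewrite /bias /bias_partial /gain /expect_t e1 e2. Qed.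


Section Ex.
Variables (R : realType) (T eps : R).
Hypotheses (hT : 1 <= T) (heps : 0 < eps).
Let M := ex_mdp T eps.

Lemma T0 : T != 0. Proof. by rewrite gt_eqF // (lt_le_trans ltr01). Qed.

Lemma trans_ok (s : 'I_4) (a : 'I_(nact M s)) :
  (forall j, 0 <= @trans R 4 M s a j) /\ \sum_j @trans R 4 M s a j = 1.
Proof.
have Ti : 0 <= 1 / T <= 1.
  apply/andP; split; first by rewrite divr_ge0 // (le_trans ler01).
  by rewrite ler_pdivrMr ?mul1r // (lt_le_trans ltr01).
case/andP: Ti => Ti0 Ti1.
case: s a => [[|[|[|[|s]]]] Hs] //= [[|[|a]] Ha] //=; split;
  rewrite ?big_ord_recl ?big_ord0 /=;
  try (case=> [[|[|[|[|j]]]] Hj] //=); rewrite ?subr_ge0 //; lra.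
Qed.

Lemma rew_ok (s : 'I_4) (a : 'I_(nact M s)) : 0 <= @rew R 4 M s a.
Proof.
case: s a => [[|[|[|[|s]]]] Hs] //= [[|[|a]] Ha] //=; try lra.
all: have := heps; lra.
Qed.

Definition sig_nat (s a : nat) : R :=
  match s, a with 0, 1 => 1 | 0, _ => 0 | 3, 0 => 1 | 3, _ => 0 | _, _ => 1 end.
Definition pi_nat (s a : nat) : R :=
  match s, a with 0, 0 => 1 | 0, _ => 0 | 3, 1 => 1 | 3, _ => 0 | _, _ => 1 end.
Definition sigp : policy M := fun s a => sig_nat (val s) (val a).
Definition pip : policy M := fun s a => pi_nat (val s) (val a).

Lemma sigp_ok : is_policy M sigp.
Proof.
move=> [[|[|[|[|s]]]] Hs] //=; split;
  rewrite ?big_ord_recl ?big_ord0 /= /sigp /=;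
  try (case=> [[|[|a]] Ha] //=); lra.
Qed.

Lemma pip_ok : is_policy M pip.
Proof.
move=> [[|[|[|[|s]]]] Hs] //=; split;
  rewrite ?big_ord_recl ?big_ord0 /= /pip /=;
  try (case=> [[|[|a]] Ha] //=); lra.
Qed.

Definition cs : R := 1/2 + eps/2.
Definition hs_nat (k : nat) : R :=
  match k with 0 => -(1/2) - eps/2 - eps*T/4 | 1 => -(1/2) - eps - eps*T/4
  | 2 => -(eps*T/4) | _ => eps*T/4 end.
Definition ws_nat (k : nat) : R :=
  match k with 0 => -(1/2) - eps/2 - eps*T/4 - eps*T*T/4
  | 1 => -(1/2) - eps/2 - eps*T/4 - eps*T*T/4 -(1/2) - eps - eps*T/4
  | 2 => - (eps*T*T/4) | _ => 0 end.
Definition hp_nat (k : nat) : R := match k with 0 | 1 => 0 | _ => -(1/2) end.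
Definition wp_nat (k : nat) : R :=
  match k with 0 | 1 => 0 | 2 => -(1/2) - T/2 | _ => -(1/2) end.
Definition colv (f : nat -> R) : 'cV[R]_4 := \col_i f (val i).

Lemma E1 : rpi M sigp = const_mx cs + (colv hs_nat - Ppi M sigp *m colv hs_nat).
Proof.
have := T0; move=> T0.
apply/matrixP => i j; rewrite ord1 {j}.
rewrite rpiE !mxE; under [in RHS]eq_bigr do rewrite PpiE mxE.
case: i => [[|[|[|[|i]]]] Hi] //=; rewrite !big_ord_recl !big_ord0 /= /sigp /cs /=.
all: by field; rewrite ?T0.
Qed.

Lemma E2 : colv hs_nat = colv ws_nat - Ppi M sigp *m colv ws_nat.
Proof.
have := T0; move=> T0.
apply/matrixP => i j; rewrite ord1 {j}.
rewrite !mxE; under [in RHS]eq_bigr do rewrite PpiE mxE.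
case: i => [[|[|[|[|i]]]] Hi] //=; rewrite !big_ord_recl !big_ord0 /= /sigp /=.
all: by field; rewrite ?T0.
Qed.

Lemma E3 : rpi M pip = const_mx (1/2) + (colv hp_nat - Ppi M pip *m colv hp_nat).
Proof.
have := T0; move=> T0.
apply/matrixP => i j; rewrite ord1 {j}.
rewrite rpiE !mxE; under [in RHS]eq_bigr do rewrite PpiE mxE.
case: i => [[|[|[|[|i]]]] Hi] //=; rewrite !big_ord_recl !big_ord0 /= /pip /=.
all: by field; rewrite ?T0.
Qed.

Lemma E4 : colv hp_nat = colv wp_nat - Ppi M pip *m colv wp_nat.
Proof.
have := T0; move=> T0.
apply/matrixP => i j; rewrite ord1 {j}.
rewrite !mxE; under [in RHS]eq_bigr do rewrite PpiE mxE.
case: i => [[|[|[|[|i]]]] Hi] //=; rewrite !big_ord_recl !big_ord0 /= /pip /=.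
all: by field; rewrite ?T0.
Qed.

Definition V_nat (g S D : R) (k : nat) : R :=
  match k with 0 => g * ((S - D) / 2) | 1 => 1/2 + g * (g * ((S - D) / 2))
  | 2 => (S - D) / 2 | _ => (S + D) / 2 end.

Lemma E5 g S D : (1 - g) * S = 1 + eps -> (1 - g * (1 - 2 * (1 / T))) * D = eps ->
  rpi M sigp = colv (V_nat g S D) - g *: (Ppi M sigp *m colv (V_nat g S D)).
Proof.
move=> hS hD.
apply/matrixP => i j; rewrite ord1 {j}.
rewrite rpiE !mxE; under [in RHS]eq_bigr do rewrite PpiE mxE.
case: i => [[|[|[|[|i]]]] Hi] //=; rewrite !big_ord_recl !big_ord0 /= /sigp /=.
all: nra.
Qed.

Definition Qv (g : R) (v : nat -> R) (s : 'I_4) (a : 'I_(nact M s)) : R :=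
  @rew R 4 M s a + g * \sum_j @trans R 4 M s a j * colv v j ord0.

Lemma Q1_le s a : @Qv 1 hs_nat s a <= cs + hs_nat (val s).
Proof.
have := T0; move=> T0.
have eT : 0 <= eps * T by apply: mulr_ge0; [apply: ltW | apply: le_trans hT].
have := heps => e0.
rewrite /Qv; under eq_bigr do rewrite mxE.
case: s a => [[|[|[|[|s]]]] Hs] //= [[|[|a]] Ha] //=;
  rewrite !big_ord_recl !big_ord0 /= /cs; try lra.
all: rewrite le_eqVlt; apply/orP; left; apply/eqP; by field; rewrite ?T0.
Qed.

Lemma Qd_all g S D : (1 - g) * S = 1 + eps -> (1 - g * (1 - 2 * (1 / T))) * D = eps ->
  1/2 + g * (1/2 + g * (g * ((S - D) / 2))) < g * ((S - D) / 2) ->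
  g * (1/2 + g * (g * ((S - D) / 2))) < (S + D) / 2 ->
  forall s a, @Qv g (V_nat g S D) s a <= V_nat g S D (val s).
Proof.
move=> hS hD A1 A2 s a.
rewrite /Qv; under eq_bigr do rewrite mxE.
case: s a => [[|[|[|[|s]]]] Hs] //= [[|[|a]] Ha] //=;
  rewrite !big_ord_recl !big_ord0 /=; nra.
Qed.

Lemma Qd_strict g S D : (1 - g) * S = 1 + eps -> (1 - g * (1 - 2 * (1 / T))) * D = eps ->
  1/2 + g * (1/2 + g * (g * ((S - D) / 2))) < g * ((S - D) / 2) ->
  g * (1/2 + g * (g * ((S - D) / 2))) < (S + D) / 2 ->
  forall s a, ((val s == 0%N) && (val a == 0%N)) || ((val s == 3%N) && (val a == 1%N)) ->
     @Qv g (V_nat g S D) s a < V_nat g S D (val s).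
Proof.
move=> hS hD A1 A2 s a.
rewrite /Qv; under eq_bigr do rewrite mxE.
case: s a => [[|[|[|[|s]]]] Hs] //= [[|[|a]] Ha] //=;
  rewrite !big_ord_recl !big_ord0 /= => _; nra.
Qed.

Lemma stochM pi : is_policy M pi -> stoch (Ppi M pi).
Proof. move=> hp; apply: Ppi_stoch hp _; exact: trans_ok. Qed.

Lemma colvE f s : colv f s ord0 = f (val s). Proof. by rewrite mxE. Qed.

Lemma gain_sig s : gain M sigp s = cs.
Proof. exact: (gain_exact (stochM sigp_ok) E1). Qed.
Lemma bias_sig s : bias M sigp s = hs_nat (val s).
Proof. by rewrite (bias_exact (stochM sigp_ok) E1 E2) colvE. Qed.
Lemma gain_pi s : gain M pip s = 1/2.
Proof. exact: (gain_exact (stochM pip_ok) E3). Qed.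
Lemma bias_pi s : bias M pip s = hp_nat (val s).
Proof. by rewrite (bias_exact (stochM pip_ok) E3 E4) colvE. Qed.

Lemma gain_bound pi : is_policy M pi -> forall s, gain M pi s <= cs.
Proof.
move=> hp.
set d := const_mx cs + (colv hs_nat - Ppi M pi *m colv hs_nat) - rpi M pi.
apply: (gain_le (stochM hp) (h := colv hs_nat) (d := d)).
- by rewrite /d opprB addrC subrK.
- move=> s; rewrite /d entB mxE entB mxE colvE.
  have h1 := Q_id pi (colv hs_nat) 1 s.
  have h2 := @pol_avg R 4 M pi s (@Qv 1 hs_nat s) (cs + hs_nat (val s)) hp
     (fun a => @Q1_le s a).
  rewrite /Qv in h2.
  lra.
- by rewrite /cs; have := heps; lra.
Qed.

Lemma opt_gainE s : opt_gain M s = cs.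
Proof.
rewrite /opt_gain; set E := [set x | _].
have hE : E cs by exists sigp; split; [exact: sigp_ok | by rewrite gain_sig].
have ub : ubound E cs by move=> x [pi [hp ->]]; exact: gain_bound.
apply/le_anti/andP; split.
  by apply: ge_sup => //; exists cs.
by apply: (ub_le_sup (ex_intro _ cs ub)).
Qed.

Definition g0 := 1 - eps / (4 * (2 + eps * T)).

Lemma g_good g : g0 < g -> g < 1 -> 1/2 < g /\ (1 - g) * (2 + eps * T) < eps / 2.
Proof.
move=> h1 h2.
have e0 := heps.
have eT : 0 <= eps * T by apply: mulr_ge0; [apply: ltW | apply: le_trans hT].
set K := 2 + eps * T.
have K0 : 0 < K by rewrite /K; lra.
set z := eps / (4 * K).
have hz : z * (4 * K) = eps by rewrite /z divfK // mulf_neq0 // gt_eqF.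
have z0 : 0 < z by rewrite /z divr_gt0 // mulr_gt0.
move: h1; rewrite /g0 -/K -/z => h1.
have hK : K = 2 + eps * T by [].
have eTe : eps <= eps * T by rewrite -{1}[eps]mulr1 ler_wpM2l // ltW.
have z4 : z < 1/4 by rewrite /z ltr_pdivrMr ?mulr_gt0 //; lra.
have p : 0 < (z - (1 - g)) * K by apply: mulr_gt0 => //; lra.
split; nra.
Qed.

Definition Sg g := (1 + eps) / (1 - g).
Definition Dg g := eps / (1 - g * (1 - 2 * (1 / T))).
Definition Vg g := V_nat g (Sg g) (Dg g).

Lemma SD_ok g : 0 < g -> g < 1 ->
  (1 - g) * Sg g = 1 + eps /\ (1 - g * (1 - 2 * (1 / T))) * Dg g = eps.
Proof.
move=> g0' g1.
have T0' : 0 < T by apply: lt_le_trans hT.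
have q0 : 0 < 1 / T by rewrite divr_gt0.
have Den : 0 < 1 - g * (1 - 2 * (1 / T)) by nra.
split; rewrite mulrC divfK // gt_eqF //; lra.
Qed.

Lemma bw_facts g : g0 < g -> g < 1 -> [/\ (1 - g) * Sg g = 1 + eps,
  (1 - g * (1 - 2 * (1 / T))) * Dg g = eps,
  1/2 + g * (1/2 + g * (g * ((Sg g - Dg g) / 2))) < g * ((Sg g - Dg g) / 2) &
  g * (1/2 + g * (g * ((Sg g - Dg g) / 2))) < (Sg g + Dg g) / 2].
Proof.
move=> h1 h2; have [hg hc] := g_good h1 h2.
have g0p : 0 < g by lra.
have [hS hD] := SD_ok g0p h2.
have [A1 A2] := ineq_main hT heps hg h2 hc hS hD.
by split.
Qed.

Lemma g0_ge : 0 <= g0.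
Proof.
have e0 := heps.
have eT : 0 <= eps * T by apply: mulr_ge0; [apply: ltW | apply: le_trans hT].
have eTe : eps <= eps * T by rewrite -{1}[eps]mulr1 ler_wpM2l // ltW.
rewrite /g0 subr_ge0 ler_pdivrMr ?mulr_gt0 //; lra.
Qed.

Lemma g0_lt1 : g0 < 1.
Proof.
have e0 := heps.
have eT : 0 <= eps * T by apply: mulr_ge0; [apply: ltW | apply: le_trans hT].
rewrite /g0 -{2}[1]subr0 ltrBlDr ltrDl divr_gt0 // mulr_gt0 //; lra.
Qed.

Lemma disc_sig g : g0 < g -> g < 1 -> forall s, disc_value M g sigp s = Vg g (val s).
Proof.
move=> h1 h2 s; have [hS hD _ _] := bw_facts h1 h2.
have g01 : 0 <= g < 1 by apply/andP; split => //; apply: le_trans (ltW h1); exact: g0_ge.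
by rewrite (disc_exact (stochM sigp_ok) g01 (E5 hS hD)) colvE.
Qed.

Lemma disc_other g pi : g0 < g -> g < 1 -> is_policy M pi ->
  exists d : 'cV[R]_4,
   [/\ forall s, disc_value M g pi s <= Vg g (val s) - d s ord0,
       forall s, 0 <= d s ord0 &
       forall s a, pi s a * (Vg g (val s) - @Qv g (Vg g) s a) <= d s ord0].
Proof.
move=> h1 h2 hp; have [hS hD A1 A2] := bw_facts h1 h2.
have g01 : 0 <= g < 1 by apply/andP; split => //; apply: le_trans (ltW h1); exact: g0_ge.
set V := colv (Vg g).
set d := V - g *: (Ppi M pi *m V) - rpi M pi.
have dE : forall s, d s ord0 = Vg g (val s) -
    \sum_a pi s a * @Qv g (Vg g) s a.
  move=> s; rewrite /d !entB entZ colvE.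
  have h := Q_id pi V g s; rewrite /Qv; lra.
have Qle : forall s a, @Qv g (Vg g) s a <= Vg g (val s).
  by move=> s a; exact: (Qd_all hS hD A1 A2).
have d0 : forall s, 0 <= d s ord0.
  move=> s; rewrite dE subr_ge0; exact: pol_avg hp (Qle s).
exists d; split => //.
- move=> s; rewrite -colvE.
  apply: (disc_le (stochM hp) g01 _ d0 (rpi_nonneg hp (@rew_ok))).
  by rewrite /d opprB addrC subrK.
- move=> s a; rewrite dE; exact: pol_gap hp (Qle s).
Qed.

Lemma sig_bw : blackwell_optimal M sigp.
Proof.
split; first exact: sigp_ok.
exists g0; split; first by apply/andP; split; [exact: g0_ge | exact: g0_lt1].
move=> g /andP[h1 h2] pi hp s.
rewrite disc_sig //.
have [d [hd d0 _]] := disc_other h1 h2 hp.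
have := hd s; have := d0 s; lra.
Qed.

Lemma pol_eq_sig pi : is_policy M pi ->
  (forall s (a : 'I_(nact M s)),
     ((val s == 0%N) && (val a == 0%N)) || ((val s == 3%N) && (val a == 1%N)) ->
     pi s a = 0) ->
  Ppi M pi = Ppi M sigp /\ rpi M pi = rpi M sigp.
Proof.
move=> hp hz; split; apply/matrixP => i j; rewrite ?ord1 ?PpiE ?rpiE;
  case: i => [[|[|[|[|i]]]] Hi] //=;
  have := proj2 (hp (Ordinal Hi)); rewrite !big_ord_recl !big_ord0 /= /sigp /=.
- have z := hz (Ordinal Hi) ord0 isT; rewrite z => hs.
  have -> : pi (Ordinal Hi) (lift ord0 ord0) = 1 by lra.
  by [].
- by rewrite addr0 => ->.
- by rewrite addr0 => ->.
- have z := hz (Ordinal Hi) (lift ord0 ord0) isT; rewrite z => hs.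
  have -> : pi (Ordinal Hi) ord0 = 1 by lra.
  by [].
- have z := hz (Ordinal Hi) ord0 isT; rewrite z => hs.
  have -> : pi (Ordinal Hi) (lift ord0 ord0) = 1 by lra.
  by [].
- by rewrite addr0 => ->.
- by rewrite addr0 => ->.
- have z := hz (Ordinal Hi) (lift ord0 ord0) isT; rewrite z => hs.
  have -> : pi (Ordinal Hi) ord0 = 1 by lra.
  by [].
Qed.

Lemma bw_unique pi : blackwell_optimal M pi ->
  Ppi M pi = Ppi M sigp /\ rpi M pi = rpi M sigp.
Proof.
case=> hp [g1 [/andP[g10 g11] hbw]].
have G0 := g0_ge; have G1 := g0_lt1.
set g := 1 - (1 - g0) * (1 - g1) / 2.
have p0 : 0 < (1 - g0) * (1 - g1) by apply: mulr_gt0; lra.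
have hga : g0 < g.
  have : (1 - g0) * (1 - g1) <= 1 - g0 by rewrite -{2}[1 - g0]mulr1 ler_wpM2l; lra.
  rewrite /g; lra.
have hgb : g1 < g.
  have : (1 - g0) * (1 - g1) <= 1 - g1 by rewrite -{2}[1 - g1]mul1r ler_wpM2r; lra.
  rewrite /g; lra.
have hg1 : g < 1 by rewrite /g; lra.
have [hS hD A1 A2] := bw_facts hga hg1.
apply: pol_eq_sig => // s a c.
have [d [hd d0 gap]] := disc_other hga hg1 hp.
have h1 := hbw g (introT andP (conj hgb hg1)) sigp sigp_ok s.
rewrite disc_sig // in h1.
have h2 := hd s; have h3 := gap s a.
have h4 := Qd_strict hS hD A1 A2 c.
have h5 := proj1 (hp s) a.
rewrite /Vg in h1 h2 h3.
apply/eqP; rewrite eq_le h5 andbT.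
nra.
Qed.

Lemma sp_sig : sp_norm (bias M sigp) = eps * T / 2 + eps + 1 / 2.
Proof.
have e0 := heps.
have eT : 0 <= eps * T by apply: mulr_ge0; [apply: ltW | apply: le_trans hT].
have -> : bias M sigp = (fun s => hs_nat (val s)) by apply: funext => s; exact: bias_sig.
rewrite /sp_norm (@bigmax_at _ _ _ (Ordinal (isT : (3 < 4)%N))); last first.
  by case=> [[|[|[|[|i]]]] Hi] //=; lra.
rewrite (@bigmin_at _ _ _ (Ordinal (isT : (1 < 4)%N))); last first.
  by case=> [[|[|[|[|i]]]] Hi] //=; lra.
rewrite /=; lra.
Qed.

Lemma sp_pi : sp_norm (bias M pip) = 1 / 2.
Proof.
have -> : bias M pip = (fun s => hp_nat (val s)) by apply: funext => s; exact: bias_pi.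
rewrite /sp_norm (@bigmax_at _ _ _ (Ordinal (isT : (0 < 4)%N))); last first.
  by case=> [[|[|[|[|i]]]] Hi] //=; lra.
rewrite (@bigmin_at _ _ _ (Ordinal (isT : (2 < 4)%N))); last first.
  by case=> [[|[|[|[|i]]]] Hi] //=; lra.
rewrite /=; lra.
Qed.

Lemma main_sec :
  (exists pi, blackwell_optimal M pi) /\
  (forall pi, blackwell_optimal M pi ->
     sp_norm (bias M pi) = eps * T / 2 + eps + 1 / 2) /\
  (exists pi, is_policy M pi /\
     (exists c : R, forall s, gain M pi s = c) /\
     (forall s, gain M pi s = opt_gain M s - eps / 2) /\
     sp_norm (bias M pi) = 1 / 2).
Proof.
split; first by exists sigp; exact: sig_bw.
split.
  move=> pi /bw_unique [e1 e2]; rewrite (bias_ext e1 e2); exact: sp_sig.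
exists pip; split; first exact: pip_ok.
split; first by exists (1/2); exact: gain_pi.
split; last exact: sp_pi.
by move=> s; rewrite gain_pi opt_gainE /cs; lra.
Qed.

End Ex.

Theorem theorem28 (R : realType) (T eps : R) (hT : 1 <= T) (heps : 0 < eps) :
  let M := ex_mdp T eps in
  (exists pi, blackwell_optimal M pi) /\
  (forall pi, blackwell_optimal M pi ->
     sp_norm (bias M pi) = eps * T / 2 + eps + 1 / 2) /\
  (exists pi, is_policy M pi /\
     (exists c : R, forall s, gain M pi s = c) /\
     (forall s, gain M pi s = opt_gain M s - eps / 2) /\
     sp_norm (bias M pi) = 1 / 2).
Proof. move=> M; exact: (main_sec hT heps). Qed.
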